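(* Let $A$ be either quadratic or cubic (as in the context), let $(a_i),(b_i)$ be finitely supported integer sequences, neither identically zero, and $q_i=a_i-b_i$. The following are equivalent. (1) With $q_\mu$ the lowest-index and $q_\nu$ the highest-index nonzero $q_i$: (a) $a_l=0$ for $l<\mu$ and $l\ge\nu$; (b) $a_\mu=q_\mu>0$; (c) $\sum_iq_i=0$; (d) $\max(q_l,0)\le a_l<\sum_{i\le l}q_i$ for $\mu<l<\nu$; (e) if $A$ is cubic, it is not true that ($a_\mu\ge2$ and $\mu=\nu-1$). (2) With $a_\mu$ the lowest-index nonzero $a_i$ and $b_\nu$ the highest-index nonzero $b_i$, and $n=\sum_ib_i$: (a) all $a_i,b_i\ge0$; (b) $a_l=0$ for $l\ge\nu$, $b_l=0$ for $l\le\mu$; (c) $\sum_ia_i=\sum_ib_i$; (d) $\sum_{i\le l}b_i<\sum_{i<l}a_i$ for $\mu<l<\nu$; (e) if $A$ is cubic, it is not true that ($n\ge2$ and $\mu=\nu-1$). (3) With $m=\sum a_i$, $n=\sum b_i$: (a) all $a_i,b_i\ge0$; (b) $m=n$; (c) for all $1\le\alpha\le m$, $1\le\beta\le n$ with $\beta\ge\alpha-1$, $S(a)_\alpha<S(b)_\beta$; (d) if $A$ is cubic, it is not true that ($n\ge2$ and $S(b)_\beta-S(a)_\alpha=1$ for all $\alpha,\beta$).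
   Context: $A$ is a generic three-dimensional Artin–Schelter regular algebra generated in degree one, of ''quadratic'' type (three generators, three quadratic relations) or ''cubic'' type (two generators, two cubic relations); only this dichotomy matters here. For a finitely supported sequence $(c_i)$ of non-negative integers, $S(c)$ is the nondecreasing sequence of length $\sum_ic_i$, indexed from $1$, in which each integer $i$ appears exactly $c_i$ times. *)

(* Defs.v *)
From mathcomp Require Import all_boot all_order all_algebra.
Set Implicit Arguments. Unset Strict Implicit. Unset Printing Implicit Defensive.
Import Order.TTheory GRing.Theory Num.Theory.
Local Open Scope ring_scope.

(* The only relevant datum about the AS-regular algebra A: its type. *)
Inductive AStype := Quadratic | Cubic.

(* Finitely supported integer sequences are functions int -> int that vanish
   outside the window [-N, N]; the window bound N is an explicit parameter. *)
Definition zidx (N k : nat) : int := k%:Z - N%:Z.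

(* sum over all integers (= over the window [-N,N]) *)
Definition zsum (N : nat) (f : int -> int) : int :=
  \sum_(0 <= k < (N + N).+1) f (zidx N k).

Definition zsum_le (N : nat) (f : int -> int) (l : int) : int :=
  \sum_(0 <= k < (N + N).+1 | zidx N k <= l) f (zidx N k).

Definition zsum_lt (N : nat) (f : int -> int) (l : int) : int :=
  \sum_(0 <= k < (N + N).+1 | zidx N k < l) f (zidx N k).

(* S(c): nondecreasing sequence in which each integer i appears c_i times
   (c is assumed nonnegative wherever S is used; absz is then the identity). *)
Definition Sseq (N : nat) (c : int -> int) : seq int :=
  flatten [seq nseq `|c (zidx N k)|%N (zidx N k) | k <- iota 0 (N + N).+1].

(* S(c)_alpha, indexed from 1 *)
Definition Sat (N : nat) (c : int -> int) (alpha : nat) : int :=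
  nth 0 (Sseq N c) alpha.-1.

Definition lowest (f : int -> int) (mu : int) : Prop :=
  f mu != 0 /\ forall i, i < mu -> f i = 0.
Definition highest (f : int -> int) (nu : int) : Prop :=
  f nu != 0 /\ forall i, nu < i -> f i = 0.

Definition cond1 (A : AStype) (N : nat) (a b : int -> int) : Prop :=
  let q := fun i => a i - b i in
  exists mu nu : int, lowest q mu /\ highest q nu /\
  [/\ (forall l, (l < mu) || (nu <= l) -> a l = 0),
      a mu = q mu /\ 0 < q mu,
      zsum N q = 0,
      (forall l, mu < l < nu ->
          Num.max (q l) 0 <= a l /\ a l < zsum_le N q l) &
      (A = Cubic -> ~ ((2 <= a mu) /\ mu = nu - 1))].

Definition cond2 (A : AStype) (N : nat) (a b : int -> int) : Prop :=
  let n := zsum N b in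
  exists mu nu : int, lowest a mu /\ highest b nu /\
  [/\ (forall i, 0 <= a i /\ 0 <= b i),
      (forall l, nu <= l -> a l = 0) /\ (forall l, l <= mu -> b l = 0),
      zsum N a = zsum N b,
      (forall l, mu < l < nu -> zsum_le N b l < zsum_lt N a l) &
      (A = Cubic -> ~ ((2 <= n) /\ mu = nu - 1))].

Definition cond3 (A : AStype) (N : nat) (a b : int -> int) : Prop :=
  let m := zsum N a in
  let n := zsum N b in
  [/\ (forall i, 0 <= a i /\ 0 <= b i),
      m = n,
      (forall alpha beta : nat,
          (1 <= alpha)%N -> alpha%:Z <= m -> (1 <= beta)%N -> beta%:Z <= n ->
          (alpha <= beta.+1)%N -> Sat N a alpha < Sat N b beta) &
      (A = Cubic -> ~ ((2 <= n) /\
          (forall alpha beta : nat,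
             (1 <= alpha)%N -> alpha%:Z <= m -> (1 <= beta)%N -> beta%:Z <= n ->
             Sat N b beta - Sat N a alpha = 1)))].

(* Main.v *)
Require Import Defs.
From mathcomp Require Import all_boot all_order all_algebra.
From mathcomp Require Import zify.
Import Order.TTheory GRing.Theory Num.Theory.
Local Open Scope ring_scope.

Lemma Lcore (w : int -> nat) (s : seq int) (k : nat) (l : int) :
  sorted <=%R s -> (k < \sum_(x <- s) w x)%N ->
  (nth 0 (flatten [seq nseq (w x) x | x <- s]) k <= l) =
  (k < \sum_(x <- s | (x <= l)%R) w x)%N.
Proof.
elim: s k => [|x s IH] k /=; first by rewrite big_nil.
move=> hs; rewrite !big_cons nth_cat size_nseq => hk.
have hs' := path_sorted hs.
have /allP hall := order_path_min le_trans hs.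
have tail0 : l < x -> (\sum_(y <- s | (y <= l)%R) w y = 0)%N.
  move=> hxl; rewrite big1_seq // => y /andP [hy ys].
  have := hall y ys; move=> hxy; exfalso; lia.
case: ifP => hkw.
  rewrite nth_nseq hkw; case: (lerP x l) => hxl.
    by rewrite ltn_addr.
  by rewrite tail0 // ltn0.
rewrite IH //; last by lia.
case: (lerP x l) => hxl.
  by apply/idP/idP; lia.
by rewrite tail0 //; apply/idP/idP; lia.
Qed.

Lemma Sseq_eq N c : Sseq N c =
  flatten [seq nseq `|c x|%N x | x <- map (zidx N) (iota 0 (N + N).+1)].
Proof. by rewrite /Sseq -map_comp. Qed.

Lemma sorted_zidx N : sorted <=%R (map (zidx N) (iota 0 (N + N).+1)).
Proof.
rewrite sorted_map; apply: (sub_sorted _ (iota_sorted 0 _)).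
by move=> i j /= hij; rewrite /zidx; lia.
Qed.

Lemma zsum_leE N c l (hc : forall i, 0 <= c i) :
  zsum_le N c l = (\sum_(x <- map (zidx N) (iota 0 (N + N).+1) | (x <= l)%R) `|c x|%N)%:Z.
Proof.
rewrite big_map /zsum_le /index_iota subn0 (big_morph Posz PoszD (erefl _)).
by apply: eq_bigr => k _; rewrite abszE ger0_norm.
Qed.

Lemma zsumE N c (hc : forall i, 0 <= c i) :
  zsum N c = (\sum_(x <- map (zidx N) (iota 0 (N + N).+1)) `|c x|%N)%:Z.
Proof.
rewrite big_map /zsum /index_iota subn0 (big_morph Posz PoszD (erefl _)).
by apply: eq_bigr => k _; rewrite abszE ger0_norm.
Qed.

Lemma Sat_le N c (alpha : nat) l (hc : forall i, 0 <= c i) :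
  (1 <= alpha)%N -> alpha%:Z <= zsum N c ->
  (Sat N c alpha <= l) = (alpha%:Z <= zsum_le N c l).
Proof.
move=> h1; rewrite zsumE // lez_nat => h2.
rewrite /Sat Sseq_eq Lcore ?sorted_zidx //; last by lia.
by rewrite zsum_leE // lez_nat; apply/idP/idP; lia.
Qed.

Lemma Fsucc N (c : int -> int) (hc : forall i, N%:Z < `|i| -> c i = 0) l :
  zsum_le N c l = zsum_le N c (l - 1) + c l.
Proof.
rewrite /zsum_le (bigID (fun k => zidx N k == l)) /= addrC; congr (_ + _).
  apply: eq_bigl => k; rewrite /zidx; case: eqP => h /=.
    by rewrite andbF; apply/esym/negP; lia.
  by rewrite andbT; apply/idP/idP; lia.
have [hin|hout] := boolP ((0 <= l + N%:Z) && (l + N%:Z < ((N + N).+1)%:Z)); last first.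
  have hcl : c l = 0 by apply: hc; move: hout; rewrite negb_and -!ltNge -!leNgt; lia.
  by rewrite hcl big1 // => k /andP [_ /eqP ->].
rewrite (eq_bigr (fun=> c l)); last by move=> k /andP [_ /eqP ->].
rewrite big_const_seq.
set t := absz (l + N%:Z).
have -> : count (fun k => (zidx N k <= l) && (zidx N k == l)) (index_iota 0 (N + N).+1) = 1%N.
  rewrite (@eq_count _ _ (pred1 t)); last first.
    move=> k /=; rewrite /zidx /t; apply/idP/idP.
      by case/andP => _ /eqP h; apply/eqP; lia.
    by move/eqP => h; apply/andP; split; [|apply/eqP]; lia.
  rewrite count_uniq_mem ?iota_uniq // /index_iota subn0 mem_iota.
  by rewrite /t; apply/eqP; rewrite eqb1; lia.
by rewrite /= addr0.
Qed.

Lemma Fmono N c (hc : forall i, 0 <= c i) j l : j <= l -> zsum_le N c j <= zsum_le N c l.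
Proof.
move=> hjl; rewrite /zsum_le (bigID (fun k => zidx N k <= j) (fun k => zidx N k <= l)) /=.
rewrite [X in _ <= X + _](eq_bigl (fun k => zidx N k <= j)); last first.
  by move=> k /=; rewrite andb_idl // => h; lia.
by rewrite lerDl sumr_ge0.
Qed.

Lemma Fge0 N c (hc : forall i, 0 <= c i) l : 0 <= zsum_le N c l.
Proof. by rewrite sumr_ge0. Qed.

Lemma Ftot N c (hc : forall i, 0 <= c i) l : zsum_le N c l <= zsum N c.
Proof.
by rewrite /zsum (bigID (fun k => zidx N k <= l)) /= lerDl sumr_ge0.
Qed.

Lemma Fhigh N c l (hc : forall i, l < i -> c i = 0) : zsum_le N c l = zsum N c.
Proof.
rewrite /zsum (bigID (fun k => zidx N k <= l)) /= [X in _ + X]big1 ?addr0 //.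
by move=> k hk; apply: hc; rewrite ltNge.
Qed.

Lemma Flow N c l (hc : forall i, i <= l -> c i = 0) : zsum_le N c l = 0.
Proof. by rewrite /zsum_le big1 // => k hk; apply: hc. Qed.

Lemma Flt N c l : zsum_lt N c l = zsum_le N c (l - 1).
Proof. by apply: eq_bigl => k; rewrite /zidx; apply/idP/idP; lia. Qed.

Lemma c12 A N a b (hsa : forall i : int, N%:Z < `|i| -> a i = 0)
  (hsb : forall i : int, N%:Z < `|i| -> b i = 0) : cond1 A N a b -> cond2 A N a b.
Proof.
rewrite /cond1 /cond2 /= => -[mu [nu [[hqmu hqlow] [[hqnu hqhigh] [ha0 [hamu hqmu0] hsum hmid hcub]]]]].
have hqmu' : a mu - b mu != 0 := hqmu.
have hqnu' : a nu - b nu != 0 := hqnu.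
have hqlow' : forall i, i < mu -> a i - b i = 0 := hqlow.
have hqhigh' : forall i, nu < i -> a i - b i = 0 := hqhigh.
have hsq : forall i, N%:Z < `|i| -> a i - b i = 0 by move=> i hi; rewrite hsa ?hsb ?subr0.
have Fq : forall l, zsum_le N (fun i => a i - b i) l = zsum_le N a l - zsum_le N b l.
  by move=> l; rewrite /zsum_le sumrB.
have zq : zsum N (fun i => a i - b i) = zsum N a - zsum N b by rewrite /zsum sumrB.
have FqS := @Fsucc N (fun i => a i - b i) hsq.
have Fqlow : forall l, l < mu -> zsum_le N (fun i => a i - b i) l = 0.
  by move=> l hl; apply: Flow => i hi; apply: hqlow'; lia.
have Fqhigh : zsum_le N (fun i => a i - b i) nu = zsum N (fun i => a i - b i).
  exact: (@Fhigh N _ _ hqhigh').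
have mu_le : mu <= nu.
  rewrite leNgt; apply/negP => h; move: hqmu'; rewrite hqhigh' // eqxx.
have Fqmu : zsum_le N (fun i => a i - b i) mu = a mu - b mu.
  by rewrite FqS Fqlow ?add0r //; lia.
have hmunu : mu < nu.
  rewrite lt_neqAle mu_le andbT; apply/eqP => e; subst nu.
  move: hsum; rewrite -Fqhigh Fqmu; lia.
have Ppos : 0 < zsum_le N (fun i => a i - b i) (nu - 1).
  have [h|h] := ltP mu (nu - 1).
    have [h1 h2] := hmid (nu - 1) (ltac:(apply/andP; split; lia)).
    move: h1; rewrite ge_max => /andP [_ h3]; exact: le_lt_trans h3 h2.
  have -> : nu - 1 = mu by lia.
  by rewrite Fqmu.
have qnu : a nu - b nu = - zsum_le N (fun i => a i - b i) (nu - 1).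
  move: hsum; rewrite -Fqhigh FqS; lia.
have ha0' : forall l, (l < mu) || (nu <= l) -> a l = 0 := ha0.
have hnn : forall i, 0 <= a i /\ 0 <= b i.
  move=> i.
  have [hi|hi] := ltP i mu.
    have := hqlow' i hi; rewrite ha0' ?hi //; lia.
  have [hi2|hi2] := leP nu i.
    rewrite ha0' ?hi2 ?orbT //; split => //.
    have [e|ne] := eqVneq i nu.
      subst i; move: qnu; rewrite ha0' ?lexx ?orbT //; lia.
    have := hqhigh' i (ltac:(move: ne hi2; rewrite neq_lt; case/orP; lia)).
    rewrite ha0' ?hi2 ?orbT //; lia.
  have [e|ne] := eqVneq i mu.
    subst i; lia.
  have [h1 h2] := hmid i (ltac:(apply/andP; split; [move: ne hi; rewrite neq_lt; case/orP; lia | lia])).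
  move: h1; rewrite ge_max => /andP [h3 h4]; lia.
exists mu, nu; split; last split; last split.
- split; first by rewrite hamu; lia.
  by move=> i hi; apply: ha0'; rewrite hi.
- split; first by move: qnu; rewrite ha0' ?lexx ?orbT //; lia.
  move=> i hi; have := hqhigh' i hi; rewrite ha0'; last by apply/orP; right; lia.
  lia.
- exact: hnn.
- split.
    by move=> l hl; apply: ha0'; rewrite hl orbT.
  move=> l hl; have [e|ne] := eqVneq l mu.
    by subst l; lia.
  have := hqlow' l (ltac:(move: ne hl; rewrite neq_lt; case/orP; lia)).
  rewrite ha0'; last by apply/orP; left; move: ne hl; rewrite neq_lt; case/orP; lia.
  lia.
- move: hsum; rewrite zq; lia.
- move=> l hl; have [h1 h2] := hmid l hl.
  move: h2; rewrite Fq (@Fsucc N a hsa) Flt; lia.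
- move=> hA [hn e]; apply: (hcub hA); split => //.
  have : zsum_le N a mu = zsum N a.
    apply: Fhigh => i hi; apply: ha0'; apply/orP; right; lia.
  rewrite (@Fsucc N a hsa) Flow; last by move=> i hi; apply: ha0'; apply/orP; left; lia.
  move: hsum; rewrite zq; lia.
Qed.

Lemma c21 A N a b (hsa : forall i : int, N%:Z < `|i| -> a i = 0)
  (hsb : forall i : int, N%:Z < `|i| -> b i = 0) : cond2 A N a b -> cond1 A N a b.
Proof.
rewrite /cond1 /cond2 /= => -[mu [nu [[hamu halow] [[hbnu hbhigh] [hnn [ha0 hb0] hsum hmid hcub]]]]].
have hmunu : mu < nu.
  by rewrite ltNge; apply/negP => h; move: hamu; rewrite ha0 // eqxx.
have hapos : 0 < a mu by have [h1 _] := hnn mu; rewrite lt_neqAle eq_sym hamu h1.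
have Fq : forall l, zsum_le N (fun i => a i - b i) l = zsum_le N a l - zsum_le N b l.
  by move=> l; rewrite /zsum_le sumrB.
have zq : zsum N (fun i => a i - b i) = zsum N a - zsum N b by rewrite /zsum sumrB.
exists mu, nu; split; last split; last split.
- split; first by rewrite (hb0 mu) ?subr0.
  by move=> i hi; rewrite /= halow // hb0 ?subr0 // ltW.
- split; first by rewrite /= ha0 // sub0r oppr_eq0.
  by move=> i hi; rewrite /= ha0 ?hbhigh ?subr0 // ltW.
- by move=> l /orP [h|h]; [apply: halow | apply: ha0].
- by rewrite hb0 // subr0.
- by rewrite zq hsum subrr.
- move=> l hl; split.
    by rewrite ge_max; apply/andP; split; have [h1 h2] := hnn l; lia.
  rewrite Fq (@Fsucc N a hsa); have := hmid l hl; rewrite Flt; lia.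
- move=> hA [h2 e]; apply: (hcub hA); split => //.
  have : zsum_le N a mu = zsum N a.
    by apply: Fhigh => i hi; apply: ha0; lia.
  rewrite (@Fsucc N a hsa) Flow; last by move=> i hi; apply: halow; lia.
  lia.
Qed.

Lemma c23 A N a b (hsa : forall i : int, N%:Z < `|i| -> a i = 0)
  (hsb : forall i : int, N%:Z < `|i| -> b i = 0) : cond2 A N a b -> cond3 A N a b.
Proof.
rewrite /cond2 /cond3 /= => -[mu [nu [[hamu halow] [[hbnu hbhigh] [hnn [ha0 hb0] hsum hmid hcub]]]]].
have hna : forall i, 0 <= a i by move=> i; case: (hnn i).
have hnb : forall i, 0 <= b i by move=> i; case: (hnn i).
have Fa_mu1 : zsum_le N a (mu - 1) = 0 by apply: Flow => i hi; apply: halow; lia.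
have Fb_mu : zsum_le N b mu = 0 by apply: Flow.
have Fa_nu1 : zsum_le N a (nu - 1) = zsum N a by apply: Fhigh => i hi; apply: ha0; lia.
have Fb_nu : zsum_le N b nu = zsum N b by apply: Fhigh.
have hmunu : mu < nu.
  by rewrite ltNge; apply/negP => h; move: hamu; rewrite ha0 // eqxx.
split => //.
- move=> al be h1 h2 h3 h4 h5; rewrite ltNge; apply/negP => hyx.
  have hyb : be%:Z <= zsum_le N b (Sat N b be) by rewrite -(@Sat_le N b be _ hnb h3 h4).
  have ymu : mu < Sat N b be.
    by rewrite ltNge (@Sat_le N b be mu hnb h3 h4) Fb_mu; lia.
  have xnu : Sat N a al <= nu - 1 by rewrite (@Sat_le N a al (nu - 1) hna h1 h2) Fa_nu1.
  have : ~~ (Sat N a al <= Sat N b be - 1) by rewrite -ltNge; lia.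
  rewrite (@Sat_le N a al _ hna h1 h2) -ltNge => hxa.
  have := hmid (Sat N b be) (ltac:(apply/andP; split; lia)).
  rewrite Flt; lia.
- move=> hA [hn2 hall]; apply: (hcub hA); split => //.
  have [nn hnn'] : exists nn : nat, zsum N b = nn%:Z.
    by exists (absz (zsum N b)); rewrite abszE ger0_norm // sumr_ge0.
  have hm : 1 <= zsum N a by rewrite hsum; lia.
  have e := hall 1%N nn (leqnn 1) hm (ltac:(lia)) (ltac:(lia)).
  have hamu' : 1 <= a mu by have := hna mu; move: hamu; lia.
  have Fa_mu : zsum_le N a mu = a mu by rewrite (@Fsucc N a hsa) Fa_mu1 add0r.
  have s1 : Sat N a 1 <= mu by rewrite (@Sat_le N a 1 mu hna (leqnn 1) hm) Fa_mu.
  have s2 : ~~ (Sat N a 1 <= mu - 1) by rewrite (@Sat_le N a 1 _ hna (leqnn 1) hm) Fa_mu1.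
  have hnn1 : (1 <= nn)%N by lia.
  have hnn2 : nn%:Z <= zsum N b by rewrite hnn'.
  have s3 : Sat N b nn <= nu by rewrite (@Sat_le N b nn nu hnb hnn1 hnn2) Fb_nu.
  have hbnu' : 1 <= b nu by have := hnb nu; move: hbnu; lia.
  have s4 : ~~ (Sat N b nn <= nu - 1).
    rewrite (@Sat_le N b nn _ hnb hnn1 hnn2); move: Fb_nu; rewrite (@Fsucc N b hsb); lia.
  lia.
Qed.

Lemma c32 A N a b (hsa : forall i : int, N%:Z < `|i| -> a i = 0)
  (hsb : forall i : int, N%:Z < `|i| -> b i = 0)
  (hb : exists i, b i != 0) : cond3 A N a b -> cond2 A N a b.
Proof.
rewrite /cond2 /cond3 /= => -[hnn hsum h3c h3d].
have hna : forall i, 0 <= a i by move=> i; case: (hnn i).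
have hnb : forall i, 0 <= b i by move=> i; case: (hnn i).
have [nn hnn'] : exists nn : nat, zsum N b = nn%:Z.
  by exists (absz (zsum N b)); rewrite abszE ger0_norm // sumr_ge0.
have hza : zsum N a = nn%:Z by rewrite hsum.
have hnn1 : (1 <= nn)%N.
  case: hb => i hi.
  have := @Fsucc N b hsb i; have := @Fge0 N b hnb (i - 1); have := @Ftot N b hnb i.
  have := hnb i; rewrite hnn'; move: hi; lia.
have h1m : 1%:Z <= zsum N a by rewrite hza; lia.
have hnm : nn%:Z <= zsum N a by rewrite hza.
have hnb2 : nn%:Z <= zsum N b by rewrite hnn'.
have Fa_mu : 1 <= zsum_le N a (Sat N a 1) by rewrite -(@Sat_le N a 1 _ hna (leqnn 1) h1m).
have Fa_mu1 : ~~ (1 <= zsum_le N a (Sat N a 1 - 1)).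
  by rewrite -(@Sat_le N a 1 _ hna (leqnn 1) h1m) -ltNge; lia.
have Fb_nu : nn%:Z <= zsum_le N b (Sat N b nn) by rewrite -(@Sat_le N b nn _ hnb hnn1 hnb2).
have Fb_nu1 : ~~ (nn%:Z <= zsum_le N b (Sat N b nn - 1)).
  by rewrite -(@Sat_le N b nn _ hnb hnn1 hnb2) -ltNge; lia.
have Fa_nu1 : nn%:Z <= zsum_le N a (Sat N b nn - 1).
  rewrite -(@Sat_le N a nn _ hna hnn1 hnm).
  have := h3c nn nn hnn1 hnm hnn1 hnb2 (leqnSn nn); lia.
have h1n : 1%:Z <= zsum N b by rewrite hnn'; lia.
have Fb_mu : ~~ (1 <= zsum_le N b (Sat N a 1)).
  rewrite -(@Sat_le N b 1 _ hnb (leqnn 1) h1n) -ltNge.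
  exact: h3c 1%N 1%N (leqnn 1) h1m (leqnn 1) h1n (leqnSn 1).
have Fa0 := @Fge0 N a hna. have Fb0 := @Fge0 N b hnb.
have Fat := @Ftot N a hna. have Fbt := @Ftot N b hnb.
have FaS := @Fsucc N a hsa. have FbS := @Fsucc N b hsb.
have Fam := @Fmono N a hna. have Fbm := @Fmono N b hnb.
exists (Sat N a 1), (Sat N b nn); split; last split; last split.
- split.
    have := FaS (Sat N a 1); have := Fa0 (Sat N a 1 - 1); move: Fa_mu Fa_mu1; lia.
  move=> i hi; have := FaS i; have := Fa0 (i - 1); have := hna i.
  have := Fam i (Sat N a 1 - 1) (ltac:(lia)); move: Fa_mu1; lia.
- split.
    have := FbS (Sat N b nn); move: Fb_nu Fb_nu1; lia.
  move=> i hi; have := FbS i; have := Fbt i; have := hnb i.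
  have := Fbm (Sat N b nn) (i - 1) (ltac:(lia)); rewrite hnn'; move: Fb_nu; lia.
- exact: hnn.
- split.
    move=> l hl; have := FaS l; have := Fat l; have := hna l.
    have := Fam (Sat N b nn - 1) (l - 1) (ltac:(lia)); rewrite hza; move: Fa_nu1; lia.
  move=> l hl; have := FbS l; have := Fb0 (l - 1); have := hnb l.
  have := Fbm l (Sat N a 1) hl; move: Fb_mu; lia.
- exact: hsum.
- move=> l /andP [hl1 hl2]; rewrite Flt ltNge; apply/negP => hK.
  have [k hk] : exists k : nat, zsum_le N a (l - 1) = k%:Z.
    by exists (absz (zsum_le N a (l - 1))); rewrite abszE ger0_norm // Fa0.
  have hk1 : (1 <= k)%N.
    have := Fam (Sat N a 1) (l - 1) (ltac:(lia)); move: Fa_mu; rewrite hk; lia.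
  have hkn : (k <= nn)%N by have := Fat (l - 1); rewrite hk hza; lia.
  have [hlt|heq] : (k < nn)%N \/ k = nn by lia.
    have hk2 : (k.+1)%:Z <= zsum N a by rewrite hza; lia.
    have hk3 : k%:Z <= zsum N b by rewrite hnn'; lia.
    have := h3c k.+1 k (ltn0Sn k) hk2 hk1 hk3 (leqnn k.+1).
    have : ~~ (Sat N a k.+1 <= l - 1) by rewrite (@Sat_le N a k.+1 _ hna (ltn0Sn k) hk2) hk; lia.
    have : Sat N b k <= l by rewrite (@Sat_le N b k _ hnb hk1 hk3); move: hK; rewrite hk.
    lia.
  have : Sat N b nn <= l by rewrite (@Sat_le N b nn _ hnb hnn1 hnb2); move: hK; rewrite hk heq.
  lia.
- move=> hA [h2 e]; apply: (h3d hA); split => //.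
  move=> al be h1 h2' h3 h4.
  have s1 : ~~ (Sat N a al <= Sat N a 1 - 1).
    by rewrite (@Sat_le N a al _ hna h1 h2'); move: Fa_mu1; lia.
  have s2 : Sat N a al <= Sat N b nn - 1.
    by rewrite (@Sat_le N a al _ hna h1 h2'); move: Fa_nu1 h2'; rewrite hza; lia.
  have s3 : ~~ (Sat N b be <= Sat N a 1).
    by rewrite (@Sat_le N b be _ hnb h3 h4); move: Fb_mu; lia.
  have s4 : Sat N b be <= Sat N b nn.
    by rewrite (@Sat_le N b be _ hnb h3 h4); move: Fb_nu h4; rewrite hnn'; lia.
  lia.
Qed.

Theorem mainTheorem15 (A : AStype) (a b : int -> int) (N : nat)
  (hsupp : forall i : int, N%:Z < `|i| -> a i = 0 /\ b i = 0)
  (ha : exists i, a i != 0) (hb : exists i, b i != 0) :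
  (cond1 A N a b <-> cond2 A N a b) /\ (cond2 A N a b <-> cond3 A N a b).
Proof.
have hsa : forall i : int, N%:Z < `|i| -> a i = 0 by move=> i /hsupp [].
have hsb : forall i : int, N%:Z < `|i| -> b i = 0 by move=> i /hsupp [].
split; split.
- exact: c12.
- exact: c21.
- exact: c23.
- exact: c32.
Qed.
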